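(* Let $P$ be a convex euclidean $p$-gon, and let $G$ be the group of isometries of $\mathbb R^2$ generated by the point reflections $T_1,\dots,T_p$ in the vertices of $P$, with generating set $S=\{T_1,\dots,T_p\}$. Then $|G_S^{(n)}|\prec n^{p-1}$.
   Context: $G_S^{(n)}$ denotes the set of elements of $G$ expressible as products of at most $n$ elements of $S\cup S^{-1}$. $g\prec h$ means $g(n)\le Ch(n)$ for some constant $C$ and all sufficiently large $n$. *)

(* Defs.v *)
From HB Require Import structures.
From mathcomp Require Import all_boot all_order all_algebra.
From mathcomp Require Import boolp classical_sets functions cardinality reals.
Set Implicit Arguments. Unset Strict Implicit. Unset Printing Implicit Defensive.
Import Order.TTheory GRing.Theory Num.Theory.
Local Open Scope ring_scope.

Definition orient (R : realType) (a b c : R * R) : R :=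
  (b.1 - a.1) * (c.2 - a.2) - (b.2 - a.2) * (c.1 - a.1).

(* v : 'I_p -> R * R lists, in cyclic order, the vertices of a convex
   euclidean p-gon: p >= 3 and, for every edge [v i, v (i+1)], all the
   other vertices lie strictly on the same side of the edge line, with a
   common orientation (all counterclockwise or all clockwise). *)
Definition convex_polygon (R : realType) (p : nat) (v : 'I_p -> R * R) : Prop :=
  (3 <= p)%N /\
  ((forall i j : 'I_p, j != i -> j != ordS i -> 0 < orient (v i) (v (ordS i)) (v j)) \/
   (forall i j : 'I_p, j != i -> j != ordS i -> orient (v i) (v (ordS i)) (v j) < 0)).

Definition point_reflection (R : realType) (c : R * R) : R * R -> R * R :=
  fun x => (2 * c.1 - x.1, 2 * c.2 - x.2).

Definition word_eval (R : realType) (p : nat) (v : 'I_p -> R * R) (w : seq 'I_p)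
  : R * R -> R * R :=
  foldr (fun i f => point_reflection (v i) \o f) id w.

(* G_S^(n): elements of G that are products of at most n elements of
   S u S^-1, where S = {T_1,...,T_p}.  Since each T_i is an involution,
   S^-1 = S, so words over S suffice. *)
Definition ball_S (R : realType) (p : nat) (v : 'I_p -> R * R) (n : nat)
  : set (R * R -> R * R) :=
  [set f | exists w : seq 'I_p, (size w <= n)%N /\ f = word_eval v w].

(* Main.v *)
Require Import Defs.
From HB Require Import structures.
From mathcomp Require Import all_boot all_order all_algebra.
From mathcomp Require Import boolp classical_sets functions cardinality reals.
From mathcomp Require Import ring lra zify.
Import Order.TTheory GRing.Theory Num.Theory.
Local Open Scope ring_scope.
Local Open Scope classical_set_scope.
Local Open Scope card_scope.

Definition cf (p : nat) (w : seq 'I_p) (i : 'I_p) : int :=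
  foldr (fun k s => (k == i)%:Z - s) 0 w.
Arguments cf {p}.

Lemma cf_sum p (w : seq 'I_p) : \sum_(i < p) cf w i = (odd (size w))%:Z.
Proof.
elim: w => [|k w IH] /=; first by rewrite big1.
rewrite sumrB IH (bigD1 k) //= eqxx big1 => [|j /negbTE]; last by rewrite eq_sym => ->.
by case: (odd (size w)).
Qed.

Lemma cf_bound p (w : seq 'I_p) i : `|cf w i| <= (size w)%:Z.
Proof.
elim: w => [|k w IH] /=; first by rewrite normr0.
apply: le_trans (ler_normB _ _) _.
rewrite intS lerD //.
by case: eqP.
Qed.

Arguments cf_sum {p}.
Arguments cf_bound {p}.

Lemma coordE (R : realType) p (v : 'I_p -> R * R) (f : R * R -> R)
  (hf : forall c x, f (point_reflection c x) = 2 * f c - f x) w x :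
  f (word_eval v w x) = (if odd (size w) then - f x else f x)
     + 2 * \sum_(i < p) (cf w i)%:~R * f (v i).
Proof.
elim: w => [|k w IH].
  by rewrite /= big1 ?mulr0 ?addr0 // => i _; rewrite mul0r.
have -> : word_eval v (k :: w) x = point_reflection (v k) (word_eval v w x) by [].
rewrite hf IH (_ : odd (size (k :: w)) = ~~ odd (size w)) //.
have -> : \sum_(i < p) ((cf (k :: w) i)%:~R : R) * f (v i)
    = f (v k) - \sum_(i < p) (cf w i)%:~R * f (v i).
  rewrite (eq_bigr (fun i => (((k == i)%:Z)%:~R * f (v i) - (cf w i)%:~R * f (v i)))); last first.
    by move=> i _; rewrite -mulrBl -intrB.
  rewrite sumrB (bigD1 k) //= eqxx big1 => [|j /negbTE]; last first.
    by rewrite eq_sym => ->; rewrite mul0r.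
  by rewrite mul1r addr0.
case: (odd (size w)) => /=; ring.
Qed.

Theorem mainTheorem16 (R : realType) (p : nat) (v : 'I_p -> R * R) :
  convex_polygon v ->
  exists C N : nat, forall n : nat, (N <= n)%N ->
    ball_S v n #<= `I_(C * n ^ (p - 1))%N.
Proof.
case: p v => [|p'] v [hp _]; first by [].
exists (2 * 3 ^ p')%N, 1%N => n hn.
rewrite subn1 /=.
pose K : finType := (bool * {ffun 'I_p' -> 'I_(n.*2).+1})%type.
pose Fc (k : K) (a : R) (f : R * R -> R) :=
  (if k.1 then - a else a) + 2 * (((k.1 : nat)%:Z)%:~R * f (v ord0)
   + \sum_(j < p') (((k.2 j : nat)%:Z - n%:Z)%:~R) * (f (v (lift ord0 j)) - f (v ord0))).
pose F (k : K) : R * R -> R * R := fun x => (Fc k x.1 fst, Fc k x.2 snd).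
have sub : ball_S v n `<=` F @` [set: K].
  move=> g [w [hw ->]].
  pose k : K := (odd (size w), [ffun j => inord (absz (cf w (lift ord0 j) + n%:Z))]).
  exists k => //.
  apply: funext => x.
  have key : forall f : R * R -> R,
      (forall c y, f (point_reflection c y) = 2 * f c - f y) ->
      f (word_eval v w x) = Fc k (f x) f.
    move=> f hf; rewrite coordE //.
    rewrite /Fc /=; congr (_ + 2 * _).
    have hc : forall j : 'I_p', (((k.2 j : nat)%:Z - n%:Z)%:~R : R) = (cf w (lift ord0 j))%:~R.
      move=> j; rewrite ffunE /= inordK.
        rewrite gez0_abs; first by rewrite addrK.
        have := cf_bound w (lift ord0 j); rewrite ler_norml => /andP [h1 _].
        rewrite -lerBlDr sub0r; apply: le_trans h1; rewrite lerN2.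
        by rewrite lez_nat.
      have := cf_bound w (lift ord0 j).
      move: hw; clear; lia.
    under [X in _ = _ * _ + X]eq_bigr => j _ do rewrite hc.
    have hs := cf_sum w.
    rewrite big_ord_recl.
    have -> : (((odd (size w) : nat)%:Z)%:~R : R) =
        (cf w ord0)%:~R + \sum_(j < p') (cf w (lift ord0 j))%:~R.
      by rewrite -hs big_ord_recl rmorphD /= rmorph_sum.
    set S1 := \sum_(j < p') _ * f (v (lift ord0 j)).
    have -> : \sum_(j < p') (cf w (lift ord0 j))%:~R * (f (v (lift ord0 j)) - f (v ord0))
        = S1 - (\sum_(j < p') ((cf w (lift ord0 j))%:~R : R)) * f (v ord0).
      by rewrite big_distrl -sumrB; apply: eq_bigr => j _; rewrite mulrBr.
    ring.
  rewrite /F -(key fst) // -(key snd) //.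
  by case: (word_eval v w x).
apply: card_le_trans (subset_card_le sub) _.
apply: card_le_trans (card_image_le F [set: K]) _.
have hK : [set: K] #<= `I_#|K|.
  have s2 : [set: K] `<=` enum_val @` [set: 'I_#|K|].
    by move=> x _; exists (enum_rank x) => //; rewrite enum_rankK.
  apply: card_le_trans (subset_card_le s2) _.
  apply: card_le_trans (card_image_le _ _) _.
  by move: (@card_II #|K|); rewrite card_eq_sym card_eq_le => /andP [].
apply: card_le_trans hK _.
rewrite card_le_II card_prod card_ffun !card_ord card_bool -mulnA leq_mul2l /=.
have h : forall e, ((n.*2.+1) ^ e <= (3 * n) ^ e)%N.
  elim=> // e IH; rewrite !expnS leq_mul //.
  by rewrite -addn1 -mul2n; lia.
by apply: leq_trans (h p') _; rewrite expnMn.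
Qed.
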